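(* Let $d\in\mathbb{N}$, $r\in\mathbb{N}$ with $r\ge2$, and set $\delta=r^{-7/2}$, $\sigma=\sqrt{\log(1/\delta)}/r$, $\gamma=\sqrt{\tfrac52\log r}$, $R=1+\gamma(2+\sqrt2)\sqrt d\,\sigma$, $b=(R+1)^2/(4\sigma^2)$, with $K_r$ as in the context. Then \[ \left|K_r(x,y)-\frac1{\sqrt{2\pi}\sigma}\exp\!\left(-\frac{(x-y)^2}{2\sigma^2}\right)\right|\le\frac{3\delta}{\sqrt{2\pi}\sigma}\qquad\forall x\in[-1,1],\ \forall y\in[-R,R]. \]
   Context: $s_{b,\delta}$ is a univariate polynomial of degree $\lceil\sqrt{2\theta\log(4/\delta)}\rceil$, $\theta=\lceil\max\{\tfrac12be^2,\log(2/\delta)\}\rceil$, with $|e^{-t}-s_{b,\delta}(t)|\le\delta$ for all $t\in[0,b]$. $K_r(x,y)=\frac1{\sqrt{2\pi}\sigma}s_{b,\delta}^2\!\left(\frac{(x-y)^2}{4\sigma^2}\right)$. $\log$ is the natural logarithm. *)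

(* Defs.v *)
From HB Require Import structures.
From mathcomp Require Import all_boot all_order all_algebra.
From mathcomp Require Import all_classical all_reals all_analysis.
Set Implicit Arguments. Unset Strict Implicit. Unset Printing Implicit Defensive.
Import Order.TTheory GRing.Theory Num.Theory.
Local Open Scope ring_scope.

Section Defs.
Variable R : realType.

Definition deltaR (r : nat) : R := (r%:R : R) `^ (- (7%:R / 2%:R)).
Definition sigmaR (r : nat) : R := Num.sqrt (ln (deltaR r)^-1) / r%:R.
Definition gammaR (r : nat) : R := Num.sqrt (5%:R / 2%:R * ln (r%:R : R)).
Definition bigR (d r : nat) : R :=
  1 + gammaR r * (2%:R + Num.sqrt 2%:R) * Num.sqrt (d%:R : R) * sigmaR r.
Definition bR (d r : nat) : R := (bigR d r + 1) ^+ 2 / (4%:R * sigmaR r ^+ 2).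

Definition theta (b del : R) : int :=
  Num.ceil (Num.max (b * expR 1 ^+ 2 / 2%:R) (ln (2%:R / del))).
Definition sdeg (b del : R) : int :=
  Num.ceil (Num.sqrt (2%:R * (theta b del)%:~R * ln (4%:R / del))).

Definition is_s_poly (b del : R) (s : {poly R}) : Prop :=
  (size s).-1 = `|sdeg b del|%N /\
  forall t : R, 0 <= t <= b -> `|expR (- t) - s.[t]| <= del.

Definition Kr (sig : R) (s : {poly R}) (x y : R) : R :=
  (Num.sqrt (2%:R * pi) * sig)^-1 * (s.[(x - y) ^+ 2 / (4%:R * sig ^+ 2)]) ^+ 2.
End Defs.

(* Main.v *)
Require Import Defs.
From HB Require Import structures.
From mathcomp Require Import all_boot all_order all_algebra.
From mathcomp Require Import all_classical all_reals all_analysis.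
From mathcomp Require Import ring lra.
Import Order.TTheory GRing.Theory Num.Theory.
Local Open Scope ring_scope.

Lemma sq_bound (R : realType) (s e del : R) :
  0 < e -> e <= 1 -> del <= 1 -> `|e - s| <= del -> `|s ^+ 2 - e ^+ 2| <= 3%:R * del.
Proof.
move=> e0 e1 d1; rewrite !ler_norml => /andP[h1 h2].
apply/andP; split; nra.
Qed.

Theorem lemma12 (R : realType) (d r : nat) (hr : (2 <= r)%N) (s : {poly R})
  (hs : is_s_poly (bR R d r) (deltaR R r) s) (x y : R) :
  -1 <= x <= 1 -> - bigR R d r <= y <= bigR R d r ->
  `| Kr (sigmaR R r) s x y
     - (Num.sqrt (2%:R * pi) * sigmaR R r)^-1
       * expR (- ((x - y) ^+ 2 / (2%:R * sigmaR R r ^+ 2))) |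
  <= 3%:R * deltaR R r / (Num.sqrt (2%:R * pi) * sigmaR R r).
Proof.
move=> /andP[hx1 hx2] /andP[hy1 hy2].
have sig0 : 0 <= sigmaR R r by rewrite /sigmaR divr_ge0 // sqrtr_ge0.
rewrite /Kr.
case: (eqVneq (sigmaR R r) 0) => [->|sn0].
  by rewrite !(mulr0, invr0, mul0r) subrr normr0.
have sigp : 0 < sigmaR R r by rewrite lt0r sn0.
case: hs => _ hs.
set sig := sigmaR R r in sig0 sn0 sigp hs *.
set del := deltaR R r in hs *.
set Rb := bigR R d r in hy1 hy2 hs.
have r0 : (0 < r)%N by apply: leq_trans hr.
have d1 : del <= 1.
  rewrite /del /deltaR /powR.
  have -> : ((r%:R : R) == 0) = false by rewrite pnatr_eq0 gtn_eqF.
  rewrite expR_le1 mulNr oppr_le0 mulr_ge0 // ?divr_ge0 // ln_ge0 // ler1n r0 //.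
set t := (x - y) ^+ 2 / (4%:R * sig ^+ 2).
have s2p : 0 < 4%:R * sig ^+ 2 by rewrite mulr_gt0 // exprn_gt0.
have ht : 0 <= t <= bR R d r.
  rewrite /bR -/sig -/Rb /t; apply/andP; split.
    by rewrite divr_ge0 ?sqr_ge0 ?(ltW s2p).
  apply: ler_wpM2r; first by rewrite invr_ge0 (ltW s2p).
  nra.
have e := hs t ht.
rewrite [X in expR (- X)](_ : _ = t * 2%:R); last first.
  rewrite /t; field.
  exact: sn0.
have -> : expR (- (t * 2%:R)) = expR (- t) ^+ 2 by rewrite -expRM_natr mulNr.
rewrite -mulrBr normrM [_ / _]mulrC.
have cp : 0 < (Num.sqrt (2%:R * pi) * sig)^-1.
  by rewrite invr_gt0 mulr_gt0 // sqrtr_gt0 mulr_gt0 // pi_gt0.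
rewrite (gtr0_norm cp); apply: ler_wpM2l; first exact: ltW cp.
apply: sq_bound.
- exact: expR_gt0.
- by rewrite expR_le1 oppr_le0; case/andP: ht.
- exact: d1.
- exact: e.
Qed.
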